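(* For every digraph $D$ and every integer $k$ with $2\le k\le |V(D)|$, we have $\kappa_k(D)\le\delta^+(D)$ and $\kappa_k(D)\le\delta^-(D)$.
   Context: Digraphs are finite, without loops and without parallel arcs. $\delta^+(D)$ and $\delta^-(D)$ denote the minimum out-degree and minimum in-degree of $D$. A digraph is strong if for every ordered pair of vertices $u,v$ there is a directed path from $u$ to $v$; a one-vertex digraph is strong. For $S\subseteq V(D)$, strong subgraphs $D_1,\dots,D_p$ of $D$ each containing $S$ are $S$-internally disjoint if $V(D_i)\cap V(D_j)=S$ and $A(D_i)\cap A(D_j)=\emptyset$ for all $i<j$. $\kappa_S(D)$ is the maximum number of $S$-internally disjoint strong subgraphs containing $S$, and $\kappa_k(D)=\min\{\kappa_S(D): S\subseteq V(D),\ |S|=k\}$. *)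

(* Defs.v *)
From mathcomp Require Import all_boot.
Set Implicit Arguments. Unset Strict Implicit. Unset Printing Implicit Defensive.

(* A digraph is a finite vertex type V with an arc relation D : rel V
   (a relation rules out parallel arcs; loops are excluded by a hypothesis
   `irreflexive D` in the theorem). V(D) = all of V. *)

Section Digraph.
Variables (V : finType) (D : rel V).

Definition outdeg (v : V) : nat := #|[set w | D v w]|.
Definition indeg (v : V) : nat := #|[set u | D u v]|.

(* minimum out-/in-degree (idx #|V| is never reached when V is nonempty) *)
Definition min_outdeg : nat := \big[minn/#|V|]_(v : V) outdeg v.
Definition min_indeg : nat := \big[minn/#|V|]_(v : V) indeg v.

Definition subgraph (H : {set V} * {set V * V}) : bool :=
  [forall a in H.2, D a.1 a.2 && (a.1 \in H.1) && (a.2 \in H.1)].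

Definition strong_sub (H : {set V} * {set V * V}) : bool :=
  subgraph H &&
  [forall u in H.1, forall v in H.1, connect (fun x y => (x, y) \in H.2) u v].

Definition has_int_disjoint (S : {set V}) (p : nat) : bool :=
  [exists F : {ffun 'I_p -> {set V} * {set V * V}},
     [forall i : 'I_p, strong_sub (F i) && (S \subset (F i).1)] &&
     [forall i : 'I_p, forall j : 'I_p, (i < j)%N ==>
        (((F i).1 :&: (F j).1 == S) && [disjoint (F i).2 & (F j).2])]].

(* kappa_S(D): the maximum such p.  Search range p <= #|V*V|; for |S| >= 2
   each subgraph has an arc and arcs are disjoint, so the true maximum is
   at most the number of arcs < #|V * V|.+1, i.e. this is the exact max. *)
Definition kappaS (S : {set V}) : nat :=
  \max_(p < #|{: V * V}|.+1 | has_int_disjoint S p) p.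

(* kappa_k(D) = min over k-subsets S (idx never reached when k <= |V|). *)
Definition kappa_k (k : nat) : nat :=
  \big[minn/#|{: V * V}|.+1]_(S : {set V} | #|S| == k) kappaS S.

End Digraph.

(* Main.v *)
Require Import Defs.
From mathcomp Require Import all_boot.

Lemma conn_first (T : finType) (e : rel T) u v :
  connect e u v -> u != v -> exists w, e u w.
Proof.
move=> /connectP [p pth ->]; case: p pth => [|w p] /=; first by rewrite eqxx.
by move=> /andP [h _] _; exists w.
Qed.

Lemma conn_last (T : finType) (e : rel T) u v :
  connect e u v -> u != v -> exists w, e w v.
Proof.
move=> /connectP [p pth ->]; case/lastP: p pth => [|p w] /=; first by rewrite eqxx.
by rewrite rcons_path last_rcons => /andP [_ h] _; exists (last u p).
Qed.

Lemma kappaS_le (V : finType) (D : rel V) (S : {set V}) v u :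
  v \in S -> u \in S -> u != v ->
  (kappaS D S <= outdeg D v)%N /\ (kappaS D S <= indeg D v)%N.
Proof.
move=> vS uS uv; split; apply/bigmax_leqP => [[p _]] /= /existsP [F /andP [/forallP H1 /forallP H2]].
- pose f i := odflt v [pick w | (v, w) \in (F i).2].
  have fP : forall i, (v, f i) \in (F i).2.
    move=> i; rewrite /f; case: pickP => [w //|] /= hn.
    have /andP [/andP [_ /forallP Hc] sub] := H1 i.
    have vi : v \in (F i).1 by apply: (subsetP sub).
    have ui : u \in (F i).1 by apply: (subsetP sub).
    have := Hc v; rewrite vi /= => /forallP /(_ u); rewrite ui /= => c.
    have vu : v != u by rewrite eq_sym.
    have [w hw] := @conn_first _ _ _ _ c vu.
    by have := hn w; rewrite /= hw.
  have finj : injective f.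
    move=> i j eij; apply/eqP; apply/negPn/negP => nij.
    wlog lt : i j eij nij / (i < j)%N.
      move=> W; case: (ltngtP i j) => h; first exact: (W i j).
      + by apply: (W j i) => //; rewrite eq_sym.
      + by move: nij; rewrite -(inj_eq val_inj) /= h eqxx.
    have := H2 i => /forallP /(_ j); rewrite lt /= => /andP [_ dj].
    by have := disjointFr dj (fP i); rewrite eij fP.
  rewrite -[p]card_ord -(card_imset _ finj) /outdeg; apply: subset_leq_card.
  apply/subsetP => _ /imsetP [i _ ->]; rewrite inE.
  have /andP [/andP [/forallP Hs _] _] := H1 i.
  by have /andP [/andP [] ] := implyP (Hs _) (fP i).
- pose f i := odflt v [pick w | (w, v) \in (F i).2].
  have fP : forall i, (f i, v) \in (F i).2.
    move=> i; rewrite /f; case: pickP => [w //|] /= hn.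
    have /andP [/andP [_ /forallP Hc] sub] := H1 i.
    have vi : v \in (F i).1 by apply: (subsetP sub).
    have ui : u \in (F i).1 by apply: (subsetP sub).
    have := Hc u; rewrite ui /= => /forallP /(_ v); rewrite vi /= => c.
    have [w hw] := @conn_last _ _ _ _ c uv.
    by have := hn w; rewrite /= hw.
  have finj : injective f.
    move=> i j eij; apply/eqP; apply/negPn/negP => nij.
    wlog lt : i j eij nij / (i < j)%N.
      move=> W; case: (ltngtP i j) => h; first exact: (W i j).
      + by apply: (W j i) => //; rewrite eq_sym.
      + by move: nij; rewrite -(inj_eq val_inj) /= h eqxx.
    have := H2 i => /forallP /(_ j); rewrite lt /= => /andP [_ dj].
    by have := disjointFr dj (fP i); rewrite eij fP.
  rewrite -[p]card_ord -(card_imset _ finj) /indeg; apply: subset_leq_card.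
  apply/subsetP => _ /imsetP [i _ ->]; rewrite inE.
  have /andP [/andP [/forallP Hs _] _] := H1 i.
  by have /andP [/andP [] ] := implyP (Hs _) (fP i).
Qed.

Lemma exS (V : finType) (v : V) k : (1 <= k)%N -> (k <= #|V|)%N ->
  exists S : {set V}, #|S| = k /\ v \in S.
Proof.
move=> k1 kV.
set s := v :: [seq x <- enum V | x != v].
have us : uniq s by rewrite /= mem_filter eqxx /= filter_uniq // enum_uniq.
have ss : size s = #|V|.
  rewrite -(card_uniqP us); apply/eqP; rewrite eqn_leq max_card /=; apply: subset_leq_card.
  apply/subsetP => x _; rewrite inE mem_filter mem_enum andbT.
  by case: eqP.
exists [set x in take k s]; split.
  rewrite cardsE (card_uniqP (take_uniq _ us)) size_take ss.
  by case: ltngtP kV.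
by rewrite inE; case: k k1 {kV} => // k _; rewrite /= inE eqxx.
Qed.

Lemma bigmin_seq_le (I : eqType) (s : seq I) (P : pred I) (F : I -> nat) z x :
  x \in s -> P x -> (\big[minn/z]_(i <- s | P i) F i <= F x)%N.
Proof.
elim: s => // a s IH; rewrite inE big_cons => /orP [/eqP <- ->|xs Px].
  by rewrite geq_minl.
case: (P a); last exact: IH.
by apply: leq_trans (geq_minr _ _) (IH xs Px).
Qed.

Theorem lemma3p2 (V : finType) (D : rel V) (k : nat) :
  irreflexive D -> (2 <= k)%N -> (k <= #|V|)%N ->
  (kappa_k D k <= min_outdeg D)%N /\ (kappa_k D k <= min_indeg D)%N.
Proof.
move=> _ k2 kV.
have key : forall v, (kappa_k D k <= outdeg D v)%N /\ (kappa_k D k <= indeg D v)%N.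
  move=> v; have [S [cS vS]] := @exS V v k (ltnW k2) kV.
  have : (0 < #|S :\ v|)%N by move: k2; rewrite -cS (cardsD1 v S) vS.
  case/card_gt0P => u; rewrite !inE => /andP [uv uS].
  have [h1 h2] := @kappaS_le V D S v u vS uS uv.
  have le : (kappa_k D k <= kappaS D S)%N.
    by apply: bigmin_seq_le; rewrite ?mem_index_enum ?cS ?eqxx.
  by split; apply: leq_trans le _.
have vcard : forall v : V, (outdeg D v <= #|V|)%N /\ (indeg D v <= #|V|)%N.
  by move=> v; split; apply: max_card.
have [v0 _] : exists v0 : V, True.
  have : (0 < #|V|)%N by apply: leq_trans kV; apply: ltnW.
  case/card_gt0P => x _.
  by exists x.
have idx : (kappa_k D k <= #|V|)%N by apply: leq_trans (proj1 (key v0)) (proj1 (vcard v0)).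
split; rewrite /min_outdeg /min_indeg;
  apply: (big_ind (fun y => kappa_k D k <= y)%N) => //;
  try (by move=> x y hx hy; rewrite leq_min hx hy);
  by move=> i _; case: (key i).
Qed.
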